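(* Let $\dot G$ be a connected, non-complete, $5$-regular and $3$ net-regular SRSG belonging to $\mathcal C_1\cup\mathcal C_4\cup\mathcal C_5$. If $\dot G$ contains an unbalanced triangle (a triangle whose product of edge signs is $-1$), then $\dot G$ is isomorphic either to $\dot S^1_8$, an SRSG with parameters $(8,5,-2,4,4)$, or to $\dot S^1_{10}$, an SRSG with parameters $(10,5,-2,4,2)$.
   Context: A signed graph $\dot G=(G,\sigma)$ is a simple graph $G$ with a sign function $\sigma:E(G)\to\{+1,-1\}$; adjacency matrix $A_{\dot G}$ has entries $\sigma(v_iv_j)$ for adjacent $v_i,v_j$ and $0$ otherwise. Connectedness and degree refer to $G$; $d^\pm(v)$ are the numbers of positive/negative edges at $v$; net-degree is $d^+(v)-d^-(v)$; $\rho$ net-regular means all net-degrees equal $\rho$. Homogeneous means all edges have the same sign. $\dot G$ on $n$ vertices is an SRSG if it is neither homogeneous complete nor edgeless and there exist $r\in\mathbb N$, $a,b,c\in\mathbb Z$ with $(A_{\dot G}^2)_{ii}=r$, $(A_{\dot G}^2)_{ij}=a$ for positive edges $v_iv_j$, $=b$ for negative edges, $=c$ for distinct non-adjacent $v_i,v_j$; parameters $(n,r,a,b,c)$ (non-complete) or $(n,r,a,b)$ (complete). Inhomogeneous SRSGs are split into classes: $\mathcal C_1$: $a=-b$ and either complete, or non-complete with $c\neq0$; $\mathcal C_2$: $a=-b$, non-complete, $c=0$; $\mathcal C_3$: $a\ne -b$ and either complete or non-complete with $c=\frac{a+b}{2}$; $\mathcal C_4$: $a\neq-b$, non-complete, $c=0$;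 $\mathcal C_5$: $a\ne-b$, non-complete, $c\ne\frac{a+b}2$, $c\neq 0$. For $m\in\{4,5\}$, $\dot S^1_{2m}$ has vertex set $\{x_t,y_t:t\in\mathbb Z_m\}$, negative edges $x_ty_t$ ($t\in\mathbb Z_m$), positive edges all four edges between $\{x_t,y_t\}$ and $\{x_{t+1},y_{t+1}\}$ for each $t$, and no other edges. *)

(* Defs.v *)
From mathcomp Require Import all_boot all_order all_algebra.
Set Implicit Arguments. Unset Strict Implicit. Unset Printing Implicit Defensive.
Import Order.TTheory GRing.Theory Num.Theory.
Local Open Scope ring_scope.

(* A signed graph on a finite vertex type T is given by its adjacency
   function A : T -> T -> int (the signed adjacency matrix):
   A x y = sigma(xy) in {+1,-1} if xy is an edge, 0 otherwise;
   simple graph: symmetric, loopless. *)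
Definition signed_graph (T : finType) (A : T -> T -> int) : Prop :=
  (forall x, A x x = 0) /\ (forall x y, A x y = A y x) /\
  (forall x y, A x y = 0 \/ A x y = 1 \/ A x y = -1).

Definition adjacent (T : finType) (A : T -> T -> int) (x y : T) : bool :=
  A x y != 0.

Definition sq (T : finType) (A : T -> T -> int) (x y : T) : int :=
  \sum_(z : T) A x z * A z y.

Definition deg (T : finType) (A : T -> T -> int) (x : T) : nat :=
  #|[set y | A x y != 0]|.
Definition dplus (T : finType) (A : T -> T -> int) (x : T) : nat :=
  #|[set y | A x y == 1]|.
Definition dminus (T : finType) (A : T -> T -> int) (x : T) : nat :=
  #|[set y | A x y == -1]|.
Definition net_deg (T : finType) (A : T -> T -> int) (x : T) : int :=
  (dplus A x)%:Z - (dminus A x)%:Z.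

Definition regular (T : finType) (A : T -> T -> int) (k : nat) : Prop :=
  forall x, deg A x = k.
Definition net_regular (T : finType) (A : T -> T -> int) (rho : int) : Prop :=
  forall x, net_deg A x = rho.

Definition connected (T : finType) (A : T -> T -> int) : Prop :=
  forall x y, connect (adjacent A) x y.

Definition complete (T : finType) (A : T -> T -> int) : Prop :=
  forall x y, x != y -> A x y != 0.
Definition edgeless (T : finType) (A : T -> T -> int) : Prop :=
  forall x y, A x y = 0.
Definition homogeneous (T : finType) (A : T -> T -> int) : Prop :=
  (forall x y, A x y != -1) \/ (forall x y, A x y != 1).

Definition srsg_cond (T : finType) (A : T -> T -> int)
    (r : nat) (a b c : int) : Prop :=
  (forall x, sq A x x = r%:Z) /\
  (forall x y, A x y = 1 -> sq A x y = a) /\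
  (forall x y, A x y = -1 -> sq A x y = b) /\
  (forall x y, x != y -> A x y = 0 -> sq A x y = c).

Definition SRSG (T : finType) (A : T -> T -> int) : Prop :=
  ~ (homogeneous A /\ complete A) /\ ~ edgeless A /\
  exists r a b c, srsg_cond A r a b c.

Definition SRSG_params (T : finType) (A : T -> T -> int)
    (n r : nat) (a b c : int) : Prop :=
  SRSG A /\ #|T| = n /\ ~ complete A /\ srsg_cond A r a b c.

(* Membership in C1 ∪ C4 ∪ C5 for a non-complete inhomogeneous SRSG with
   parameters (r,a,b,c) (for non-complete ones these classes read):
   C1: a = -b, c <> 0;  C4: a <> -b, c = 0;
   C5: a <> -b, c <> (a+b)/2, c <> 0. *)
Definition in_C1 (a b c : int) : Prop := a = - b /\ c != 0.
Definition in_C4 (a b c : int) : Prop := a != - b /\ c = 0.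
Definition in_C5 (a b c : int) : Prop :=
  a != - b /\ 2 * c != a + b /\ c != 0.

Definition inhomogeneous (T : finType) (A : T -> T -> int) : Prop :=
  ~ homogeneous A.

Definition has_unbalanced_triangle (T : finType) (A : T -> T -> int) : Prop :=
  exists x y z : T, [/\ x != y, y != z & x != z] /\
    [/\ A x y != 0, A y z != 0, A x z != 0 & A x y * A y z * A z x = -1].

Definition sg_iso (T T' : finType) (A : T -> T -> int) (B : T' -> T' -> int)
  : Prop :=
  exists f : T -> T', bijective f /\ forall x y, B (f x) (f y) = A x y.

(* The signed graph S^1_{2m}: vertices x_t = (t,false), y_t = (t,true),
   t in Z_m; negative edges x_t y_t; positive edges between {x_t,y_t} and
   {x_{t+1},y_{t+1}}. *)
Definition S1 (m : nat) (u v : 'I_m * bool) : int :=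
  if u.1 == v.1 then (if u.2 != v.2 then -1 else 0)
  else if ((u.1).+1 %% m == v.1)%N || ((v.1).+1 %% m == u.1)%N then 1
  else 0.

(* Main.v *)
Require Import Defs.
From mathcomp Require Import all_boot all_order all_algebra.
From mathcomp Require Import ring zify.
Set Implicit Arguments. Unset Strict Implicit. Unset Printing Implicit Defensive.
Import Order.TTheory GRing.Theory Num.Theory.
Local Open Scope ring_scope.

Definition ind (b : bool) : int := if b then 1 else 0.

Definition nxt4 (i : 'I_4) : 'I_4 := Ordinal (ltn_pmod i.+1 (isT : (0 < 4)%N)).
Definition prv4 (i : 'I_4) : 'I_4 := Ordinal (ltn_pmod (i + 3) (isT : (0 < 4)%N)).
Lemma a41 i : nxt4 (prv4 i) = i.
Proof. apply: val_inj; case: i => [[|[|[|[|i]]]] Hi] //. Qed.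
Lemma a42 i : nxt4 i != prv4 i.
Proof. case: i => [[|[|[|[|i]]]] Hi] //. Qed.
Lemma a43 (i j : 'I_4) : i != j ->
  ((i.+1 %% 4 == j) || (j.+1 %% 4 == i))%N = (j == nxt4 i) || (j == prv4 i).
Proof. case: i => [[|[|[|[|i]]]] Hi] //; case: j => [[|[|[|[|j]]]] Hj] //. Qed.

Definition nxt5 (i : 'I_5) : 'I_5 := Ordinal (ltn_pmod i.+1 (isT : (0 < 5)%N)).
Definition prv5 (i : 'I_5) : 'I_5 := Ordinal (ltn_pmod (i + 4) (isT : (0 < 5)%N)).
Lemma a51 i : nxt5 (prv5 i) = i.
Proof. apply: val_inj; case: i => [[|[|[|[|[|i]]]]] Hi] //. Qed.
Lemma a52 i : nxt5 i != prv5 i.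
Proof. case: i => [[|[|[|[|[|i]]]]] Hi] //. Qed.
Lemma a53 (i j : 'I_5) : i != j ->
  ((i.+1 %% 5 == j) || (j.+1 %% 5 == i))%N = (j == nxt5 i) || (j == prv5 i).
Proof. case: i => [[|[|[|[|[|i]]]]] Hi] //; case: j => [[|[|[|[|[|j]]]]] Hj] //. Qed.

Section Basic.
Variable T : finType.
Variable A : T -> T -> int.
Hypothesis A0 : forall x, A x x = 0.
Hypothesis Asym : forall x y, A x y = A y x.
Hypothesis Atri : forall x y, A x y = 0 \/ A x y = 1 \/ A x y = -1.
Hypothesis Hdeg : forall x, deg A x = 5%N.
Hypothesis Hnet : forall x, net_deg A x = 3.

Definition P x y : bool := A x y == 1.

Lemma Psym x y : P x y = P y x.
Proof. by rewrite /P Asym. Qed.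

Lemma sum_ind (p : pred T) : \sum_z ind (p z) = (#|[set z | p z]|)%:Z.
Proof.
rewrite -sum1dep_card (big_morph Posz PoszD (erefl _)) [RHS]big_mkcond.
by apply: eq_bigr => z _; case: (p z).
Qed.

Lemma dpm x : dplus A x = 4%N /\ dminus A x = 1%N.
Proof.
have H1 : (dplus A x + dminus A x = 5)%N.
  rewrite -(Hdeg x) /deg /dplus /dminus -(cardsID [set y | A x y == 1] [set y | A x y != 0]).
  have E1 : [set y | A x y != 0] :&: [set y | A x y == 1] = [set y | A x y == 1].
    by apply/setP => y; rewrite !inE; case: (Atri x y) => [->|[->|->]].
  have E2 : [set y | A x y != 0] :\: [set y | A x y == 1] = [set y | A x y == -1].
    by apply/setP => y; rewrite !inE; case: (Atri x y) => [->|[->|->]].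
  by rewrite E1 E2.
have := Hnet x; rewrite /net_deg => H2.
lia.
Qed.

Definition f x := odflt x [pick y | A x y == -1].

Lemma Af x : A x (f x) = -1.
Proof.
rewrite /f; case: pickP => [y /eqP //| H].
have [_ H1] := dpm x; move: H1; rewrite /dminus.
have -> : [set y | A x y == -1] = set0 by apply/setP => y; rewrite inE H in_set0.
by rewrite cards0.
Qed.

Lemma Nuniq x y : A x y = -1 -> y = f x.
Proof.
move=> Hy; have [_ H1] := dpm x; move: H1; rewrite /dminus => /eqP/cards1P [z Hz].
have : y \in [set y | A x y == -1] by rewrite inE Hy.
have : f x \in [set y | A x y == -1] by rewrite inE Af.
by rewrite Hz !inE => /eqP -> /eqP ->.
Qed.

Lemma ff x : f (f x) = x.
Proof. by symmetry; apply: Nuniq; rewrite Asym Af. Qed.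

Lemma f_inj : injective f.
Proof. exact: (can_inj ff). Qed.

Lemma fneq x : f x != x.
Proof. by apply/eqP => E; have := Af x; rewrite E A0. Qed.

Lemma AN x y : (A x y == -1) = (y == f x).
Proof. by apply/eqP/eqP => [/Nuniq | ->] //; apply: Af. Qed.

Lemma Aval x y : A x y = ind (P x y) - ind (y == f x).
Proof.
rewrite -AN /P; by case: (Atri x y) => [->|[->|->]].
Qed.

Lemma tri_to_P : has_unbalanced_triangle A -> exists v w, P v w && P w (f v).
Proof.
case=> x [y [z [[Hxy Hyz Hxz] [Axy Ayz Axz Hprod]]]].
rewrite (Asym z x) in Hprod.
case: (Atri x y) => [E1|[E1|E1]]; first by rewrite E1 eqxx in Axy.
all: case: (Atri y z) => [E2|[E2|E2]]; first by rewrite E2 eqxx in Ayz.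
all: case: (Atri x z) => [E3|[E3|E3]]; first by rewrite E3 eqxx in Axz.
all: move/eqP: Hprod; rewrite E1 E2 E3 //= => _.
- exists x, y; rewrite /P E1 eqxx /=; move/Nuniq: E3 => <-; by rewrite E2.
- exists y, x; rewrite /P Asym E1 eqxx /=; move/Nuniq: E2 => <-; by rewrite E3.
- exists x, z; rewrite /P E3 eqxx /=; move/Nuniq: E1 => <-; by rewrite Asym E2.
- move/Nuniq: E1 => E1; move/Nuniq: E2 => E2.
  by move: Hxz; rewrite E2 E1 ff eqxx.
Qed.

Lemma sumA x : \sum_z A x z = 3.
Proof.
under eq_bigr do rewrite Aval.
rewrite sumrB !sum_ind.
have [H1 _] := dpm x; move: H1; rewrite /dplus /P => ->.
have -> : [set z | z == f x] = [set f x] by apply/setP => z; rewrite !inE.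
by rewrite cards1.
Qed.


Lemma eqf y z : (y == f z) = (z == f y).
Proof. by apply/eqP/eqP => ->; rewrite ff. Qed.

Lemma sum_ind1 (F : T -> int) w : \sum_z F z * ind (z == w) = F w.
Proof.
rewrite (bigD1 w) //= eqxx mulr1 big1 ?addr0 // => z /negbTE ->; by rewrite mulr0.
Qed.

Lemma sum_ind1' (F : T -> int) w : \sum_z ind (z == w) * F z = F w.
Proof. rewrite -[RHS](sum_ind1 F w); apply: eq_bigr => z _; exact: mulrC. Qed.

Definition K x y := \sum_z ind (P x z) * ind (P z y).

Lemma S1l x y : \sum_z A x z * ind (P z y) = K x y - ind (P (f x) y).
Proof.
under eq_bigr do rewrite Aval mulrBl.
by rewrite sumrB sum_ind1'.
Qed.

Lemma S2l x y : \sum_z ind (P x z) * A z y = K x y - ind (P x (f y)).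
Proof.
under eq_bigr do rewrite Aval eqf mulrBr.
by rewrite sumrB sum_ind1.
Qed.

Lemma assoc x y : \sum_z A x z * sq A z y = \sum_z sq A x z * A z y.
Proof.
rewrite /sq; transitivity (\sum_z \sum_w A x z * A z w * A w y).
  apply: eq_bigr => z _; rewrite big_distrr /=; apply: eq_bigr => w _ /=; exact: mulrA.
rewrite exchange_big; apply: eq_bigr => w _; rewrite big_distrl; by apply: eq_bigr.
Qed.

Variables (r : nat) (a b c : int).
Hypothesis Hsq : srsg_cond A r a b c.

Lemma sqE x z : sq A x z = c + (r%:Z - c) * ind (x == z) + (a - c) * ind (P x z)
   + (b - c) * ind (z == f x).
Proof.
have [Hr [Ha [Hb Hc]]] := Hsq.
case: (eqVneq x z) => [<-|Hxz].
  rewrite Hr /P A0 (eq_sym x (f x)) (negbTE (fneq x)) /=; ring.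
rewrite /= /P; case: (Atri x z) => [H|[H|H]].
- rewrite Hc // H /=.
  have -> : (z == f x) = false by apply/negbTE; rewrite -AN H.
  rewrite /=; ring.
- rewrite Ha // H /=.
  have -> : (z == f x) = false by apply/negbTE; rewrite -AN H.
  rewrite /=; ring.
- rewrite Hb // H /=.
  have -> : (z == f x) = true by rewrite -AN H.
  rewrite /=; ring.
Qed.

Hypothesis Habc : a + b != 2 * c.

Lemma comm x y : P x (f y) = P (f x) y.
Proof.
set u := ind (P x (f y)); set v := ind (P (f x) y).
have HL : \sum_z A x z * sq A z y = 3 * c + (r%:Z - c) * A x y + (a - c) * (K x y - v)
    + (b - c) * (u - ind (x == y)).
  transitivity (\sum_z (c * A x z + (r%:Z - c) * (A x z * ind (z == y))
      + (a - c) * (A x z * ind (P z y)) + (b - c) * (A x z * ind (z == f y)))).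
    by apply: eq_bigr => z _; rewrite sqE eqf; ring.
  rewrite !big_split /= -!mulr_sumr sumA sum_ind1 S1l sum_ind1 (Aval x (f y)).
  rewrite (inj_eq f_inj) (eq_sym y x) /u /v; ring.
have HR : \sum_z sq A x z * A z y = 3 * c + (r%:Z - c) * A x y + (a - c) * (K x y - u)
    + (b - c) * (v - ind (x == y)).
  transitivity (\sum_z (c * A z y + (r%:Z - c) * (ind (x == z) * A z y)
      + (a - c) * (ind (P x z) * A z y) + (b - c) * (ind (z == f x) * A z y))).
    by apply: eq_bigr => z _; rewrite sqE; ring.
  rewrite !big_split /= -!mulr_sumr.
  have -> : \sum_z A z y = 3 by rewrite -(sumA y); apply: eq_bigr => z _; rewrite Asym.
  have -> : \sum_z ind (x == z) * A z y = A x y.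
    by rewrite -[RHS](sum_ind1' (fun z => A z y) x); apply: eq_bigr => z _; rewrite eq_sym.
  rewrite S2l sum_ind1' (Aval (f x) y) ff (eq_sym y x) /u /v; ring.
have E := assoc x y; rewrite HL HR in E.
have : (a + b - 2 * c) * (u - v) == 0.
  apply/eqP; rewrite -[RHS](subrr (3 * c + (r%:Z - c) * A x y + (a - c) * (K x y - u)
    + (b - c) * (v - ind (x == y)))).
  rewrite -{1}E; ring.
rewrite mulf_eq0 subr_eq0 (negbTE Habc) /= subr_eq0 /u /v.
by case: (P x (f y)); case: (P (f x) y).
Qed.


Definition CP x y : {set T} := [set z | P x z && P z y].
Definition Pset x : {set T} := [set y | P x y].

Lemma ind_and u w : ind u * ind w = ind (u && w).
Proof. by case: u; case: w; rewrite /= ?mulr1 ?mulr0 ?mul0r. Qed.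

Lemma KE x y : K x y = (#|CP x y|)%:Z.
Proof. rewrite /K /CP -sum_ind; apply: eq_bigr => z _; exact: ind_and. Qed.

Lemma sqf x y : x != y -> sq A x y = (#|CP x y|)%:Z - 2 * ind (P x (f y)).
Proof.
move=> Hxy; rewrite /sq.
transitivity (\sum_z (ind (P x z) * ind (P z y) - ind (P x z) * ind (z == f y)
   - ind (z == f x) * ind (P z y) + ind (z == f x) * ind (z == f y))).
  by apply: eq_bigr => z _; rewrite (Aval x z) (Aval z y) (eqf y z); ring.
rewrite !big_split /= !sumrN -/(K x y) KE sum_ind1 !sum_ind1' (inj_eq f_inj) (negbTE Hxy) comm.
rewrite /=; ring.
Qed.

Lemma card_P x : #|Pset x| = 4%N.
Proof. by have [H _] := dpm x; move: H; rewrite /dplus. Qed.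

Lemma useq_le (S : {set T}) (s : seq T) : uniq s -> all (mem S) s -> (size s <= #|S|)%N.
Proof.
move=> Us /allP As; move/card_uniqP: Us => <-.
by apply: subset_leq_card; apply/subsetP => z /As.
Qed.

Lemma card_minus (S Q : {set T}) (s : seq T) : uniq s -> all (mem S) s ->
  (forall z, z \in Q -> (z \in S) && (z \notin s)) -> (#|Q| + size s <= #|S|)%N.
Proof.
move=> Us /allP As HQ; move/card_uniqP: Us => <-.
rewrite -cardUI.
have -> : #|[predI Q & s]| = 0%N.
  apply: eq_card0 => z; rewrite !inE; apply/negP => /andP [/HQ /andP [_ /negP H] ?]; exact: H.
rewrite addn0; apply: subset_leq_card; apply/subsetP => z; rewrite !inE => /orP [/HQ /andP [] //|].
exact: As.
Qed.

Lemma ex_nb x (s : seq T) : (size s < 4)%N -> exists t, P x t && (t \notin s).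
Proof.
move=> Hs; case: (boolP [exists t, P x t && (t \notin s)]) => [/existsP [t Ht]|H].
  by exists t.
exfalso; have : (#|Pset x| <= #|s|)%N.
  apply: subset_leq_card; apply/subsetP => z; rewrite inE => Pz.
  apply/negPn/negP => Hz; move/negP: H; apply; apply/existsP; exists z; by rewrite Pz.
rewrite card_P => H4; have := card_size s; lia.
Qed.

Lemma card_ge1 (S : {set T}) z : z \in S -> (1 <= #|S|)%N.
Proof. by move=> Hz; rewrite card_gt0; apply/set0Pn; exists z. Qed.

Hypothesis Htri : exists v w, P v w && P w (f v).

Lemma b_ge1 : 1 <= b.
Proof.
have [Hr [Ha [Hb Hc]]] := Hsq.
case: Htri => v [w /andP [H1 H2]].
rewrite -(Hb v (f v) (Af v)) sqf; last by rewrite eq_sym fneq.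
rewrite ff /P A0 /= mulr0 subr0.
have := @card_ge1 (CP v (f v)) w; rewrite inE H1 H2 => /(_ isT); lia.
Qed.

Lemma CPf u : (1 <= #|CP u (f u)|)%N.
Proof.
have [Hr [Ha [Hb Hc]]] := Hsq.
have := b_ge1; rewrite -(Hb u (f u) (Af u)) sqf; last by rewrite eq_sym fneq.
rewrite ff /P A0 /= mulr0 subr0; lia.
Qed.

Lemma Cl u y : P u y -> P u (f y).
Proof.
have [Hr [Ha [Hb Hc]]] := Hsq.
move=> Puv; apply/negPn/negP => nPufv.
have [w] : exists w, w \in CP u (f u) by apply/set0Pn; rewrite -card_gt0; exact: CPf.
rewrite inE => /andP [Puw Pwfu].
have Pufw : P u (f w) by rewrite Psym -comm.
have Huy : u != y by apply/eqP => E; move: Puv; rewrite E /P A0.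
have Huw : u != w by apply/eqP => E; move: Puw; rewrite E /P A0.
have Ea1 : a = (#|CP u y|)%:Z.
  by rewrite -(Ha u y (eqP Puv)) sqf // (negbTE nPufv) /= mulr0 subr0.
have Ea2 : a = (#|CP u w|)%:Z - 2.
  by rewrite -(Ha u w (eqP Puw)) sqf // Pufw /= mulr1.
have Hyw : y != w by apply/eqP => E; move: nPufv; rewrite E Pufw.
have Hyfw : y != f w by apply/eqP => E; move: nPufv; rewrite E ff Puw.
have HwNfw : w != f w by rewrite eq_sym fneq.
case: (boolP (P y w)) => Pyw.
- have H1 := @card_ge1 (CP u y) w; rewrite inE Puw Psym Pyw /= in H1.
  have H1' := H1 isT.
  have H2 : (#|CP u w| + size [:: w; f w] <= #|Pset u|)%N.
    apply: card_minus.
    - by rewrite /= inE andbT HwNfw.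
    - by rewrite /= !inE Puw Pufw.
    move=> z; rewrite !inE => /andP [-> Pzw] /=.
    apply/negP => /orP [/eqP E|/eqP E]; move: Pzw; rewrite E /P ?A0 //.
    by rewrite Asym Af.
  rewrite card_P /= in H2; lia.
- have H2 : (#|CP u w| + size [:: w; f w; y] <= #|Pset u|)%N.
    apply: card_minus.
    - by rewrite /= !inE negb_or HwNfw eq_sym Hyw eq_sym Hyfw.
    - by rewrite /= !inE Puw Pufw Puv.
    move=> z; rewrite !inE => /andP [-> Pzw] /=.
    apply/negP => /orP [/eqP E|/orP [/eqP E|/eqP E]]; move: Pzw; rewrite E ?(negbTE Pyw) /P ?A0 //.
    by rewrite Asym Af.
  rewrite card_P /= in H2; lia.
Qed.

Lemma PfR u y : P u (f y) = P u y.
Proof. by apply/idP/idP => [/Cl | /Cl]; rewrite ?ff. Qed.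

Lemma PfL u y : P (f u) y = P u y.
Proof. by rewrite -comm PfR. Qed.

Lemma sqf2 x y : x != y -> sq A x y = (#|CP x y|)%:Z - 2 * ind (P x y).
Proof. by move=> H; rewrite sqf // PfR. Qed.


Definition samepair s t := (t == s) || (t == f s).

Lemma spC s t : samepair s t = samepair t s.
Proof. by rewrite /samepair eq_sym eqf. Qed.

Lemma sp_trans s t w : samepair s t -> samepair t w -> samepair s w.
Proof.
move=> /orP [/eqP ->|/eqP ->] /orP [/eqP ->|/eqP ->];
  by rewrite /samepair ?ff ?eqxx ?orbT.
Qed.

Lemma spPR q s t : samepair s t -> P q t = P q s.
Proof. by move=> /orP [/eqP ->|/eqP ->]; rewrite ?PfR. Qed.

Lemma spPL q s t : samepair s t -> P t q = P s q.
Proof. by move=> /orP [/eqP ->|/eqP ->]; rewrite ?PfL. Qed.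

Lemma sp_refl s : samepair s s.
Proof. by rewrite /samepair eqxx. Qed.

Lemma sp_f s : samepair s (f s).
Proof. by rewrite /samepair eqxx orbT. Qed.

Lemma nb4 x a0 b0 t : P x a0 -> P x b0 -> ~~ samepair a0 b0 -> P x t ->
  samepair a0 t || samepair b0 t.
Proof.
move=> Ha Hb Hab Ht; apply/negPn/negP => Hn.
rewrite /samepair !negb_or in Hab Hn.
case/andP: Hab => H1 H2.
case/andP: Hn => /andP [H3 H4] /andP [H5 H6].
have e1 : (a0 == f a0) = false by rewrite eq_sym (negbTE (fneq a0)).
have e2 : (a0 == b0) = false by rewrite eq_sym (negbTE H1).
have e3 : (a0 == f b0) = false by rewrite eqf (negbTE H2).
have e4 : (f a0 == b0) = false by rewrite eq_sym (negbTE H2).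
have e5 : (f a0 == f b0) = false by rewrite (inj_eq f_inj) e2.
have e6 : (b0 == f b0) = false by rewrite eq_sym (negbTE (fneq b0)).
have e7 : (a0 == t) = false by rewrite eq_sym (negbTE H3).
have e8 : (f a0 == t) = false by rewrite eq_sym (negbTE H4).
have e9 : (b0 == t) = false by rewrite eq_sym (negbTE H5).
have e10 : (f b0 == t) = false by rewrite eq_sym (negbTE H6).
have := @useq_le (Pset x) [:: a0; f a0; b0; f b0; t].
rewrite card_P /= !in_cons in_nil e1 e2 e3 e4 e5 e6 e7 e8 e9 e10 /= !inE.
by rewrite Ha Hb Ht PfR Ha PfR Hb => /(_ isT isT).
Qed.

Lemma conn_closed (S : pred T) x y :
  (forall s t, S s -> adjacent A s t -> S t) -> S x -> connect (adjacent A) x y -> S y.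
Proof.
move=> Hcl Sx /connectP [p pth ->]; elim: p x Sx pth => [|z p IH] x Sx //= /andP [Hxz pth].
apply: (IH z) => //; exact: Hcl Hxz.
Qed.

Lemma dist2 : ~ complete A -> connected A ->
  exists p q z, [/\ p != q, A p q = 0, A p z != 0 & A z q != 0].
Proof.
move=> Hnc Hcon.
case: (boolP [exists x, exists y, (x != y) && (A x y == 0)]) => [/existsP [x /existsP [y /andP [Hxy /eqP Hxy0]]]|H];
  last first.
  exfalso; apply: Hnc => x y Hxy; apply/negP => /eqP E; move/negP: H; apply.
  by apply/existsP; exists x; apply/existsP; exists y; rewrite Hxy E eqxx.
case: (boolP [exists q, exists z, [&& (x != q), (A x q == 0), (A x z != 0) & (A z q != 0)]]) =>
   [/existsP [q /existsP [z /and4P [H1 /eqP H2 H3 H4]]]|H]; first by exists x, q, z.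
exfalso.
have : (fun t => (t == x) || (A x t != 0)) y.
  apply: (@conn_closed (fun t => (t == x) || (A x t != 0)) x y); last 2 first.
  - by rewrite /= eqxx.
  - exact: Hcon.
  move=> s t; rewrite /adjacent /= => /orP [/eqP -> ->|Hs Hst]; first by rewrite orbT.
  case: (eqVneq t x) => //= Htx; apply/negP => /eqP Ht0.
  move/negP: H; apply; apply/existsP; exists t; apply/existsP; exists s.
  by rewrite eq_sym Htx Ht0 Hs Hst.
by rewrite /= Hxy0 eqxx orbF eq_sym (negbTE Hxy).
Qed.


Lemma cycle_iso (m : nat) (X : 'I_m -> T) (nxt prv : 'I_m -> 'I_m) (i0 : 'I_m) :
  (forall i, nxt (prv i) = i) ->
  (forall i, nxt i != prv i) ->
  (forall i j : 'I_m, i != j ->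
     ((i.+1 %% m == j) || (j.+1 %% m == i))%N = (j == nxt i) || (j == prv i)) ->
  (forall i j, i != j -> ~~ samepair (X i) (X j)) ->
  (forall i, P (X i) (X (nxt i))) ->
  connected A -> sg_iso A (@S1 m).
Proof.
move=> Ha1 Ha2 Ha3 H1 H2 Hcon.
pose g := fun p : 'I_m * bool => if p.2 then f (X p.1) else X p.1.
have gsp p : samepair (X p.1) (g p) by case: p => i [] /=; rewrite ?sp_f ?sp_refl.
have Pprv i : P (X i) (X (prv i)) by have := H2 (prv i); rewrite Ha1 Psym.
have Hnp i : ~~ samepair (X (nxt i)) (X (prv i)) by apply: H1; exact: Ha2.
have Padj i j : i != j -> P (X i) (X j) = (j == nxt i) || (j == prv i).
  move=> Hij; apply/idP/idP.
  - move=> Pij; have := nb4 (H2 i) (Pprv i) (Hnp i) Pij.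
    case: (eqVneq j (nxt i)) => [//|Hjn]; case: (eqVneq j (prv i)) => [//|Hjp].
    by rewrite (negbTE (H1 _ _ _)) ?(negbTE (H1 _ _ _)) // eq_sym.
  - by case/orP => /eqP ->; rewrite ?H2 ?Pprv.
have key p q : A (g p) (g q) = S1 p q.
  case: p => i bb; case: q => j bb'; rewrite /S1 /=.
  case: (eqVneq i j) => [<-|Hij].
  - by case: bb; case: bb'; rewrite /g /= ?A0 ?Af // Asym Af.
  rewrite Ha3 // -(Padj i j Hij).
  have Hs := gsp (i, bb); have Ht := gsp (j, bb').
  rewrite -(spPL _ Hs) -(spPR _ Ht) /=.
  case: (Atri (g (i, bb)) (g (j, bb'))) => [E|[E|E]]; rewrite /P E //.
  exfalso; move/Nuniq: E => E.
  have := H1 i j Hij; rewrite (sp_trans (sp_trans Hs (sp_f _))) //.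
  by rewrite -E spC.
have ginj : injective g.
  move=> [i bb] [j bb'] E.
  case: (eqVneq i j) => [Eij|Hij].
  - subst j; move: E; rewrite /g /=; case: bb; case: bb' => //= E.
    + by have := fneq (X i); rewrite E eqxx.
    + by have := fneq (X i); rewrite -E eqxx.
  - exfalso; have := H1 i j Hij.
    by rewrite (sp_trans (gsp (i, bb))) // E spC (gsp (j, bb')).
have gsurj t : exists p, g p = t.
  have : (fun t => [exists i, samepair (X i) t]) t.
    apply: (@conn_closed (fun t => [exists i, samepair (X i) t]) (X i0) t); last 2 first.
    - by apply/existsP; exists i0; exact: sp_refl.
    - exact: Hcon.
    move=> s u /existsP [i Hi]; rewrite /adjacent => Hsu.
    case: (Atri s u) => [E|[E|E]]; first by rewrite E eqxx in Hsu.
    + have Psu : P (X i) u by rewrite -(spPL _ Hi) /P E.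
      case/orP: (nb4 (H2 i) (Pprv i) (Hnp i) Psu) => Hk; apply/existsP; by eexists; exact: Hk.
    + move/Nuniq: E => ->; apply/existsP; exists i; exact: sp_trans Hi (sp_f s).
  move=> /existsP [i /orP [/eqP ->|/eqP ->]]; first by exists (i, false).
  by exists (i, true).
pose h := fun t => odflt (i0, false) [pick p | g p == t].
have hK : cancel h g.
  move=> t; rewrite /h; case: pickP => [p /eqP //|H].
  by case: (gsurj t) => p E; have := H p; rewrite E eqxx.
have gK : cancel g h by move=> p; apply: ginj; rewrite hK.
exists h; split; first by exists g.
by move=> x y; rewrite -key !hK.
Qed.


Lemma sigdiff q s t : P q s != P q t -> ~~ samepair s t.
Proof. by apply: contra => H; rewrite (spPR q H). Qed.

Hypothesis Hcon : connected A.
Hypothesis Hnc : ~ complete A.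

Lemma pos_mid p q z : p != q -> A p q = 0 -> A p z != 0 -> A z q != 0 -> P z p.
Proof.
move=> Hpq Hpq0 Hpz Hzq.
case: (Atri z p) => [E|[E|E]]; first by rewrite Asym E eqxx in Hpz.
  by rewrite /P E.
move/Nuniq: E => E; exfalso.
case: (Atri z q) => [E'|[E'|E']]; first by rewrite E' eqxx in Hzq.
  have : P p q by rewrite E PfL /P E'.
  by rewrite /P Hpq0.
by move/Nuniq: E' => E'; move: Hpq; rewrite E E' eqxx.
Qed.

Lemma main_sec : sg_iso A (@S1 4) \/ sg_iso A (@S1 5).
Proof.
have [Hr [Ha [Hb Hc]]] := Hsq.
have Pneq x y : P x y -> x != y by move=> H; apply/eqP => E; move: H; rewrite E /P A0.
case: Htri => x0 _.
have [x1 /andP [P01 _]] := @ex_nb x0 [::] isT.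
have [x4 /andP [P04 N14]] := @ex_nb x0 [:: x1; f x1] isT.
have S14 : ~~ samepair x1 x4 by rewrite /samepair; move: N14; rewrite !inE ?orbF.
case: (boolP (P x1 x4)) => P14.
  exfalso.
  have a_ge0 : 0 <= a.
    rewrite -(Ha x0 x1 (eqP P01)) sqf2 ?Pneq // P01 /= mulr1.
    have : (size [:: x4; f x4] <= #|CP x0 x1|)%N.
      apply: useq_le; first by rewrite /= inE andbT eq_sym fneq.
      by rewrite /= !inE P04 PfR P04 PfL (Psym x4 x1) P14.
    move=> /= H; lia.
  have [p [q [z [Hpq Hpq0 Hpz Hzq]]]] := dist2 Hnc Hcon.
  have Pzp := pos_mid Hpq Hpq0 Hpz Hzq.
  have Pzq : P z q.
    apply: (@pos_mid q p z); [by rewrite eq_sym|by rewrite Asym|by rewrite Asym|by rewrite Asym].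
  have Spq : ~~ samepair p q.
    rewrite /samepair negb_or eq_sym Hpq /=; apply/eqP => E.
    by move: Hpq0; rewrite E Af.
  have CP0 : #|CP z p| = 0%N.
    apply: eq_card0 => t; rewrite !inE; apply/negP => /andP [Pzt Ptp].
    case/orP: (nb4 Pzp Pzq Spq Pzt) => /(spPL p) E; move: Ptp; rewrite E.
      by rewrite /P A0.
    by rewrite /P Asym Hpq0.
  have := Ha z p (eqP Pzp); rewrite sqf2 ?Pneq // Pzp CP0 /= => E.
  lia.
have CP010 : #|CP x0 x1| = 0%N.
  apply: eq_card0 => t; rewrite !inE; apply/negP => /andP [P0t Pt1].
  case/orP: (nb4 P01 P04 S14 P0t) => /(spPL x1) E; move: Pt1; rewrite E.
    by rewrite /P A0.
  by rewrite Psym (negbTE P14).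
have Ea : a = -2.
  by rewrite -(Ha x0 x1 (eqP P01)) sqf2 ?Pneq // P01 CP010.
have TF x y z : P x y -> P x z -> P z y -> False.
  move=> Pxy Pxz Pzy.
  have := Ha x y (eqP Pxy); rewrite sqf2 ?Pneq // Pxy Ea /= mulr1 => E.
  have E0 : #|CP x y| = 0%N by lia.
  by have := card0_eq E0 z; rewrite !inE Pxz Pzy.
have [x2 /andP [P12 N02]] := @ex_nb x1 [:: x0; f x0] isT.
have S02 : ~~ samepair x0 x2 by rewrite /samepair; move: N02; rewrite !inE ?orbF.
have P02 : P x0 x2 = false.
  by apply/negP => H; apply: (TF x1 x0 x2); rewrite // Psym.
have P10 : P x1 x0 by rewrite Psym.
have P40 : P x4 x0 by rewrite Psym.
have P41 : P x4 x1 = false by rewrite Psym (negbTE P14).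
have P21 : P x2 x1 by rewrite Psym.
have P20 : P x2 x0 = false by rewrite Psym.
have P00 : P x0 x0 = false by rewrite /P A0.
have P11 : P x1 x1 = false by rewrite /P A0.
have P22 : P x2 x2 = false by rewrite /P A0.
have P44 : P x4 x4 = false by rewrite /P A0.
have S41 : ~~ samepair x4 x1 by rewrite spC.
have S20 : ~~ samepair x2 x0 by rewrite spC.
case: (boolP (P x4 x2)) => P42.
  left.
  have P24 : P x2 x4 by rewrite Psym.
  pose X := fun i : 'I_4 => nth x0 [:: x0; x1; x2; x4] i.
  apply: (@cycle_iso 4 X nxt4 prv4 ord0 a41 a42 a43) => //.
  - case=> [[|[|[|[|i]]]] Hi] //; case=> [[|[|[|[|j]]]] Hj] // Hij; rewrite /X /=;
    first [ by case/eqP: Hij; apply: val_inj | by apply: (@sigdiff x0); rewrite ?P00 ?P01 ?P02 ?P04 ?P10 ?P11 ?P12 ?(negbTE P14)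
          | by apply: (@sigdiff x1); rewrite ?P00 ?P01 ?P02 ?P04 ?P10 ?P11 ?P12 ?(negbTE P14)
          | by [] ].
  - by case=> [[|[|[|[|i]]]] Hi] //; rewrite /X /=.
right.
have [x3 /andP [P43 N03]] := @ex_nb x4 [:: x0; f x0] isT.
have S03 : ~~ samepair x0 x3 by rewrite /samepair; move: N03; rewrite !inE ?orbF.
have P03 : P x0 x3 = false.
  by apply/negP => H; apply: (TF x4 x0 x3); rewrite // Psym.
have P13 : P x1 x3 = false.
  apply/negP => H.
  case/orP: (nb4 P10 P12 S02 H) => Hs; first by rewrite Hs in S03.
  by move: P43; rewrite (spPR x4 Hs) (negbTE P42).
have Hne02 : x0 != x2 by apply/eqP => E; move: S02; rewrite E /samepair eqxx.
have A02 : A x0 x2 = 0.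
  case: (Atri x0 x2) => [//|[E|E]]; first by move: P02; rewrite /P E.
  by move/Nuniq: E => E; move: S02; rewrite /samepair E eqxx orbT.
have c2 : c = 2.
  rewrite -(Hc x0 x2 Hne02 A02) sqf2 // P02 /= mulr0 subr0.
  have H1 : (size [:: x1; f x1] <= #|CP x0 x2|)%N.
    apply: useq_le; first by rewrite /= inE andbT eq_sym fneq.
    by rewrite /= !inE P01 PfR P01 PfL P12.
  have H2 : (#|CP x0 x2| + size [:: x4; f x4] <= #|Pset x0|)%N.
    apply: card_minus; first by rewrite /= inE andbT eq_sym fneq.
      by rewrite /= !inE P04 PfR P04.
    move=> z; rewrite !inE => /andP [-> Pz2] /=; apply/negP => /orP [/eqP E|/eqP E];
      by move: Pz2; rewrite E ?PfL (negbTE P42).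
  rewrite card_P /= in H2; rewrite /= in H1.
  have -> : #|CP x0 x2| = 2%N by apply/eqP; rewrite eqn_leq H1 -(leq_add2r 2) H2.
  done.
have Hne13 : x1 != x3 by apply/eqP => E; move: P43; rewrite -E P41.
have A13 : A x1 x3 = 0.
  case: (Atri x1 x3) => [//|[E|E]]; first by move: P13; rewrite /P E.
  by move/Nuniq: E => E; move: P43; rewrite E PfR P41.
have P23 : P x2 x3.
  apply/negPn/negP => N23.
  have : #|CP x1 x3| = 0%N.
    apply: eq_card0 => t; rewrite !inE; apply/negP => /andP [P1t Pt3].
    case/orP: (nb4 P10 P12 S02 P1t) => /(spPL x3) E; move: Pt3; rewrite E.
      by rewrite P03.
    by rewrite (negbTE N23).
  have := Hc x1 x3 Hne13 A13; rewrite sqf2 // P13 c2 /= mulr0 subr0 => E.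
  move=> E0; rewrite E0 in E; done.
have P30 : P x3 x0 = false by rewrite Psym.
have P31 : P x3 x1 = false by rewrite Psym.
have P32 : P x3 x2 by rewrite Psym.
have P34 : P x3 x4 by rewrite Psym.
have P24 : P x2 x4 = false by rewrite Psym (negbTE P42).
pose X := fun i : 'I_5 => nth x0 [:: x0; x1; x2; x3; x4] i.
apply: (@cycle_iso 5 X nxt5 prv5 ord0 a51 a52 a53) => //.
- case=> [[|[|[|[|[|i]]]]] Hi] //; case=> [[|[|[|[|[|j]]]]] Hj] // Hij; rewrite /X /=;
  first [ by case/eqP: Hij; apply: val_inj | by apply: (@sigdiff x0); rewrite ?P00 ?P01 ?P02 ?P03 ?P04
        | by apply: (@sigdiff x1); rewrite ?P10 ?P11 ?P12 ?P13 ?(negbTE P14)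
        | by apply: (@sigdiff x4); rewrite ?P40 ?P41 ?(negbTE P42) ?P43 ?P44
        | by apply: (@sigdiff x2); rewrite ?P20 ?P21 ?P22 ?P23 ?P24 ].
- by case=> [[|[|[|[|[|i]]]]] Hi] //; rewrite /X /=.
Qed.

End Basic.

Definition Emk (m : nat) (cv : int) (x y : 'I_m * bool) : int :=
  if x == y then 5 else if S1 x y == 1 then -2 else if S1 x y == -1 then 4 else cv.

Lemma sq4 (x y : 'I_4 * bool) : sq (@S1 4) x y = Emk 4 x y.
Proof.
rewrite /sq -(pair_big predT predT (fun i b => S1 x (i,b) * S1 (i,b) y)) /=.
rewrite !big_ord_recl big_ord0 !big_bool.
case: x => [[[|[|[|[|?]]]] ?] [|]] //; case: y => [[[|[|[|[|?]]]] ?] [|]] //; vm_compute; reflexivity.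
Qed.

Lemma sq5 (x y : 'I_5 * bool) : sq (@S1 5) x y = Emk 2 x y.
Proof.
rewrite /sq -(pair_big predT predT (fun i b => S1 x (i,b) * S1 (i,b) y)) /=.
rewrite !big_ord_recl big_ord0 !big_bool.
case: x => [[[|[|[|[|[|?]]]]] ?] [|]] //; case: y => [[[|[|[|[|[|?]]]]] ?] [|]] //; vm_compute; reflexivity.
Qed.

Lemma S1xx m (x : 'I_m * bool) : S1 x x = 0.
Proof. by rewrite /S1 !eqxx. Qed.

Lemma params_of m cv n : (forall x y, sq (@S1 m) x y = Emk cv x y) ->
  #|{: 'I_m * bool}| = n -> ~ complete (@S1 m) -> ~ edgeless (@S1 m) ->
  SRSG_params (@S1 m) n 5 (-2) 4 cv.
Proof.
move=> Hsq Hn Hnc Hne.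
have Hc : srsg_cond (@S1 m) 5 (-2) 4 cv.
  split; first by move=> x; rewrite Hsq /Emk eqxx.
  split.
    move=> x y H; rewrite Hsq /Emk; case: eqVneq => [E|_]; last by rewrite H.
    by rewrite E S1xx in H.
  split.
    move=> x y H; rewrite Hsq /Emk; case: eqVneq => [E|_]; last by rewrite H.
    by rewrite E S1xx in H.
  by move=> x y Hxy H; rewrite Hsq /Emk (negbTE Hxy) H.
split; last by [].
split; first by case.
split; first by [].
by exists 5%N, (-2), 4, cv.
Qed.

Lemma params4 : SRSG_params (@S1 4) 8 5 (-2) 4 4.
Proof.
apply: params_of.
- exact: sq4.
- by rewrite card_prod card_ord card_bool.
- move=> H.
  have E : S1 (Ordinal (isT : (0 < 4)%N), false) (Ordinal (isT : (2 < 4)%N), false) = 0.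
    by vm_compute.
  by move: (H (Ordinal (isT : (0 < 4)%N), false) (Ordinal (isT : (2 < 4)%N), false) isT); rewrite E eqxx.
- move=> H.
  have E : S1 (Ordinal (isT : (0 < 4)%N), false) (Ordinal (isT : (0 < 4)%N), true) = -1.
    by vm_compute.
  by move: (H (Ordinal (isT : (0 < 4)%N), false) (Ordinal (isT : (0 < 4)%N), true)); rewrite E.
Qed.

Lemma params5 : SRSG_params (@S1 5) 10 5 (-2) 4 2.
Proof.
apply: params_of.
- exact: sq5.
- by rewrite card_prod card_ord card_bool.
- move=> H.
  have E : S1 (Ordinal (isT : (0 < 5)%N), false) (Ordinal (isT : (2 < 5)%N), false) = 0.
    by vm_compute.
  by move: (H (Ordinal (isT : (0 < 5)%N), false) (Ordinal (isT : (2 < 5)%N), false) isT); rewrite E eqxx.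
- move=> H.
  have E : S1 (Ordinal (isT : (0 < 5)%N), false) (Ordinal (isT : (0 < 5)%N), true) = -1.
    by vm_compute.
  by move: (H (Ordinal (isT : (0 < 5)%N), false) (Ordinal (isT : (0 < 5)%N), true)); rewrite E.
Qed.

Theorem lemma3p1 (T : finType) (A : T -> T -> int) :
  signed_graph A ->
  SRSG A -> connected A -> ~ complete A ->
  regular A 5 -> net_regular A 3 ->
  inhomogeneous A ->
  (exists (r : nat) (a b c : int),
      srsg_cond A r a b c /\ (in_C1 a b c \/ in_C4 a b c \/ in_C5 a b c)) ->
  has_unbalanced_triangle A ->
  (sg_iso A (@S1 4) /\ SRSG_params (@S1 4) 8 5 (-2) 4 4) \/
  (sg_iso A (@S1 5) /\ SRSG_params (@S1 5) 10 5 (-2) 4 2).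
Proof.
move=> [A0 [Asym Atri]] _ Hcon Hnc Hreg Hnet _ [r [a [b [c [Hsq Hcls]]]]] Htri.
have Habc : a + b != 2 * c.
  case: Hcls => [[Hab Hc]|[[Hab Hc]|[Hab [Hc2 Hc0]]]].
  - apply/eqP => E; move/eqP: Hc; apply; lia.
  - apply/eqP => E; move/eqP: Hab; apply; lia.
  - by rewrite eq_sym.
have Htri' := tri_to_P Asym Atri Hreg Hnet Htri.
case: (@main_sec T A A0 Asym Atri Hreg Hnet r a b c Hsq Habc Htri' Hcon Hnc) => H.
- by left; split => //; exact: params4.
- by right; split => //; exact: params5.
Qed.
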